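(* Let $m\geq 4$. There is a constant $\tilde C_m$, depending only on $m$, with $\tilde C_m>0$ when $m\geq 5$ and $\tilde C_4=0$, such that for every non-negative continuous $\frac{2\pi}{m}$-periodic function $h:\mathbb{R}\to\mathbb{R}$, \[ c_h:=12\,(\partial_{\theta\theta}+4)^{-1}h\ \geq\ \tilde C_m\,\frac{1}{2\pi}\int_{-\pi}^{\pi}h . \] Moreover, if there exists $\theta$ with $c_h(\theta)=0$, then necessarily $h\equiv0$.
   Context: For $m\ge3$, $(\partial_{\theta\theta}+4)^{-1}$ denotes the inverse of $\partial_{\theta\theta}+4$ acting on $2\pi/m$-periodic functions on $\mathbb{R}$ (equivalently $m$-fold symmetric functions on $\mathbb{S}^1=\mathbb{R}/2\pi\mathbb{Z}$), which is well defined since such functions have no Fourier modes $\pm2$. *)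

(* Defs.v *)
From Stdlib Require Import Reals.
From Coquelicot Require Import Coquelicot.
Open Scope R_scope.

Definition periodic (T : R) (f : R -> R) : Prop := forall x, f (x + T) = f x.

(* u = (d^2/dtheta^2 + 4)^{-1} h on 2pi/m-periodic functions:
   u is the 2pi/m-periodic, twice differentiable solution of u'' + 4 u = h.
   For m >= 3 this solution is unique (the kernel cos 2t, sin 2t is not
   2pi/m-periodic), and it exists for continuous 2pi/m-periodic h. *)
Definition inv_op_d2_plus4 (m : nat) (h u : R -> R) : Prop :=
  periodic (2 * PI / INR m) u /\
  (forall x, ex_derive u x) /\
  (forall x, ex_derive (Derive u) x) /\
  (forall x, Derive (Derive u) x + 4 * u x = h x).

(* Main.v *)
Require Import Defs.
From Stdlib Require Import Reals.
From Coquelicot Require Import Coquelicot.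
From Stdlib Require Import Lra ZArith.
Open Scope R_scope.

Lemma cont_eps (g : R -> R) y : continuous g y -> forall eps, 0 < eps ->
  exists d, 0 < d /\ forall x, Rabs (x - y) < d -> Rabs (g x - g y) < eps.
Proof.
  intros Hc eps He.
  apply continuity_pt_filterlim in Hc.
  destruct (Hc eps He) as [d [Hd H]].
  exists d; split; [lra|]. intros x Hx.
  destruct (Req_dec x y) as [Heq|Hne].
  - subst x. rewrite Rminus_diag, Rabs_R0; lra.
  - apply (H x). split; [split; [exact I| auto] | exact Hx].
Qed.

Lemma exR (h : R -> R) : (forall x, continuous h x) -> forall a b, ex_RInt h a b.
Proof. intros Hc a b; apply (@ex_RInt_continuous R_CompleteNormedModule); intros; apply Hc. Qed.

Lemma shiftR (h : R -> R) T : (forall x, continuous h x) -> (forall x, h (x + T) = h x) ->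
  forall a b, RInt h (a + T) (b + T) = RInt h a b.
Proof.
  intros Hc Hp a b.
  pose proof (RInt_comp_lin h 1 T a b (exR h Hc _ _)) as E.
  rewrite (RInt_ext _ h) in E.
  - rewrite E. f_equal; ring.
  - intros x _. unfold scal; simpl; unfold mult; simpl. rewrite !Rmult_1_l. apply Hp.
Qed.

Lemma perI (h : R -> R) T : (forall x, continuous h x) -> (forall x, h (x + T) = h x) ->
  forall a, RInt h a (a + T) = RInt h 0 T.
Proof.
  intros Hc Hp a.
  rewrite <- (RInt_Chasles h a 0 (a+T)) by (apply exR; auto).
  rewrite <- (RInt_Chasles h 0 T (a+T)) by (apply exR; auto).
  replace (RInt h T (a + T)) with (RInt h (0 + T) (a + T)) by (f_equal; ring).
  rewrite (shiftR h T Hc Hp 0 a).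
  rewrite <- (opp_RInt_swap h 0 a) by (apply exR; auto).
  replace (0 + T) with T by ring.
  unfold plus, opp; simpl. ring.
Qed.

Lemma sumI (h : R -> R) T : (forall x, continuous h x) -> (forall x, h (x + T) = h x) ->
  forall a n, RInt h a (a + INR n * T) = INR n * RInt h 0 T.
Proof.
  intros Hc Hp a n. induction n.
  - simpl. rewrite Rmult_0_l, Rplus_0_r, RInt_point. unfold zero; simpl; ring.
  - rewrite S_INR.
    rewrite <- (RInt_Chasles h a (a + INR n * T)) by (apply exR; auto).
    rewrite IHn.
    replace (a + (INR n + 1) * T) with ((a + INR n * T) + T) by ring.
    rewrite perI by auto. unfold plus; simpl; ring.
Qed.

Lemma perN (h : R -> R) T : (forall x, h (x + T) = h x) ->
  forall n y, h (y + INR n * T) = h y.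
Proof.
  intros Hp n. induction n; intro y.
  - simpl. f_equal; ring.
  - rewrite S_INR. replace (y + (INR n + 1) * T) with ((y + INR n * T) + T) by ring.
    rewrite Hp; auto.
Qed.

Lemma perZ (h : R -> R) T : (forall x, h (x + T) = h x) ->
  forall k y, h (y + IZR k * T) = h y.
Proof.
  intros Hp k y. destruct k as [|p|p].
  - f_equal; ring.
  - rewrite <- Znat.positive_nat_Z, <- INR_IZR_INZ. apply perN; auto.
  - replace (IZR (Z.neg p)) with (- IZR (Z.pos p)) by (simpl; auto).
    rewrite <- Znat.positive_nat_Z, <- INR_IZR_INZ.
    rewrite <- (perN h T Hp (Pos.to_nat p) (y + - INR (Pos.to_nat p) * T)).
    f_equal; ring.
Qed.

Lemma cover (h : R -> R) T th : 0 < T -> (forall x, h (x + T) = h x) ->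
  forall x, exists y, th <= y < th + T /\ h x = h y.
Proof.
  intros HT Hp x.
  set (r := (x - th) / T).
  destruct (archimed r) as [A1 A2].
  set (k := (up r - 1)%Z).
  assert (Hk : IZR k = IZR (up r) - 1) by (unfold k; rewrite minus_IZR; auto).
  exists (x - IZR k * T). split.
  - assert (E : x - IZR k * T - th = (r - IZR k) * T) by (unfold r; field; lra).
    assert (0 <= (r - IZR k) * T) by (apply Rmult_le_pos; lra).
    assert (0 < (1 - (r - IZR k)) * T) by (apply Rmult_lt_0_compat; lra).
    nra.
  - rewrite <- (perZ h T Hp k (x - IZR k * T)). f_equal; ring.
Qed.

Lemma pos_zero (g : R -> R) a b : (forall x, continuous g x) ->
  (forall x, a < x < b -> 0 <= g x) -> RInt g a b = 0 ->
  forall y, a < y < b -> g y = 0.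
Proof.
  intros Hc Hpos H0 y Hy.
  destruct (Rle_lt_or_eq_dec 0 (g y) (Hpos y Hy)) as [Hlt|Heq]; [|auto].
  exfalso.
  destruct (cont_eps g y (Hc y) (g y / 2)) as [d [Hd Hd']]; [lra|].
  set (e := Rmin (d/2) (Rmin ((y-a)/2) ((b-y)/2))).
  assert (e1 : e <= d/2) by apply Rmin_l.
  assert (e2 : e <= (y-a)/2) by (eapply Rle_trans; [apply Rmin_r| apply Rmin_l]).
  assert (e3 : e <= (b-y)/2) by (eapply Rle_trans; [apply Rmin_r| apply Rmin_r]).
  assert (e0 : 0 < e) by (unfold e; repeat apply Rmin_pos; lra).
  assert (I1 : 0 <= RInt g a (y - e)).
  { apply RInt_ge_0; [lra| apply exR; auto|]. intros; apply Hpos; lra. }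
  assert (I3 : 0 <= RInt g (y + e) b).
  { apply RInt_ge_0; [lra| apply exR; auto|]. intros; apply Hpos; lra. }
  assert (I2 : 0 < RInt g (y - e) (y + e)).
  { apply RInt_gt_0; [lra| |intros; apply Hc].
    intros x Hx. assert (Rabs (x - y) < d) by (apply Rabs_def1; lra).
    specialize (Hd' x H). apply Rabs_def2 in Hd'. lra. }
  rewrite <- (RInt_Chasles g a (y - e) b) in H0 by (apply exR; auto).
  rewrite <- (RInt_Chasles g (y - e) (y + e) b) in H0 by (apply exR; auto).
  unfold plus in H0; simpl in H0. lra.
Qed.

Lemma endpt (h : R -> R) a T : continuous h a -> 0 < T ->
  (forall y, a < y < a + T -> h y = 0) -> h a = 0.
Proof.
  intros Hc HT H.
  destruct (Req_dec (h a) 0) as [|Hne]; auto. exfalso.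
  destruct (cont_eps h a Hc (Rabs (h a))) as [d [Hd Hd']]; [apply Rabs_pos_lt; auto|].
  set (e := Rmin (d/2) (T/2)).
  assert (e1 : e <= d/2) by apply Rmin_l.
  assert (e2 : e <= T/2) by apply Rmin_r.
  assert (e0 : 0 < e) by (unfold e; apply Rmin_pos; lra).
  assert (Rabs (a + e - a) < d) by (rewrite Rabs_pos_eq; lra).
  specialize (Hd' _ H0). rewrite H in Hd' by lra.
  rewrite Rminus_0_l, Rabs_Ropp in Hd'. lra.
Qed.

Lemma dper (u : R -> R) T : (forall x, u (x+T) = u x) -> (forall x, ex_derive u x) ->
  forall x, Derive u (x + T) = Derive u x.
Proof.
  intros Hp Hd x.
  assert (H : is_derive (fun y => u (y + T)) x (Derive u (x + T))).
  { auto_derive. apply Hd. apply Rmult_1_l. }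
  apply (is_derive_ext _ u) in H; [|intros; apply Hp].
  symmetry. apply is_derive_unique. exact H.
Qed.

Lemma key (u h : R -> R) T th : (forall x, continuous h x) -> (forall x, u (x+T) = u x) ->
  (forall x, ex_derive u x) -> (forall x, ex_derive (Derive u) x) ->
  (forall x, Derive (Derive u) x + 4 * u x = h x) ->
  RInt (fun p => cos (2*(p-th)-T) * h p) th (th+T) = 4 * sin T * u th.
Proof.
  intros Hc Hp Hd Hdd Heq.
  pose (F := fun p => cos (2*(p-th)-T) * Derive u p + 2 * sin (2*(p-th)-T) * u p).
  assert (HI : is_RInt (fun p => cos (2*(p-th)-T) * h p) th (th+T) (minus (F (th+T)) (F th))).
  { apply (@is_RInt_derive R_CompleteNormedModule).
    - intros x _. unfold F. rewrite <- Heq. auto_derive.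
      + split; [apply Hdd|split; [apply Hd|exact I]].
      + change (fun x0 : R => Derive u x0) with (Derive u).
        change (fun x0 : R => u x0) with u. match goal with |- ?a = ?b => assert (E : @eq R a b) by (unfold Rminus; ring); exact E end.
    - intros x _. apply (@continuous_mult R_UniformSpace R_AbsRing (fun p => cos (2*(p-th)-T)) h).
      + apply (@ex_derive_continuous R_AbsRing R_NormedModule). auto_derive. exact I.
      + apply Hc. }
  apply (@is_RInt_unique R_CompleteNormedModule) in HI. rewrite HI.
  unfold minus, plus, opp, F; simpl.
  replace (2 * (th + T - th) - T) with T by ring.
  replace (2 * (th - th) - T) with (- T) by ring.
  rewrite cos_neg, sin_neg, Hp, dper; auto. ring.
Qed.

Lemma contw (h : R -> R) th T : (forall x, continuous h x) ->
  forall x, continuous (fun p => cos (2*(p-th)-T) * h p) x.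
Proof.
  intros Hc x.
  apply (@continuous_mult R_UniformSpace R_AbsRing (fun p => cos (2*(p-th)-T)) h).
  + apply (@ex_derive_continuous R_AbsRing R_NormedModule). auto_derive. exact I.
  + apply Hc.
Qed.

Lemma cosb T z : 0 < T <= PI -> -T <= z <= T -> cos T <= cos z.
Proof.
  intros HT Hz. destruct (Rle_dec 0 z).
  - apply cos_decr_1; lra.
  - rewrite <- (cos_neg z). apply cos_decr_1; lra.
Qed.

Theorem mainTheorem6 :
  forall m : nat, (4 <= m)%nat ->
  exists Ct : R,
    ((5 <= m)%nat -> 0 < Ct) /\ ((m = 4)%nat -> Ct = 0) /\
    forall h : R -> R,
      (forall x, continuous h x) ->
      (forall x, 0 <= h x) ->
      periodic (2 * PI / INR m) h ->
      forall u : R -> R, inv_op_d2_plus4 m h u ->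
        (forall theta, 12 * u theta >= Ct * (/ (2 * PI) * RInt h (- PI) PI)) /\
        ((exists theta, 12 * u theta = 0) -> forall x, h x = 0).
Proof.
  intros m Hm.
  pose proof PI_RGT_0 as HPI.
  assert (Hm4 : 4 <= INR m) by (replace 4 with (INR 4) by (simpl; ring); apply le_INR; auto).
  set (T := 2*PI/INR m).
  assert (HTm : T * INR m = 2*PI) by (unfold T; field; lra).
  assert (HT0 : 0 < T) by (unfold T; apply Rdiv_lt_0_compat; lra).
  assert (HT2 : T <= PI/2) by nra.
  assert (Hs : 0 < sin T) by (apply sin_gt_0; lra).
  assert (Hcos : 0 <= cos T) by (apply cos_ge_0; lra).
  exists (3 * T * cos T / sin T). split; [|split].
  - intros H5.
    assert (5 <= INR m) by (replace 5 with (INR 5) by (simpl; ring); apply le_INR; auto).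
    assert (T < PI/2) by nra.
    assert (0 < cos T) by (apply cos_gt_0; lra).
    apply Rdiv_lt_0_compat; [|lra].
    apply Rmult_lt_0_compat; [apply Rmult_lt_0_compat|]; lra.
  - intros H4.
    assert (HT : T = PI/2).
    { unfold T. rewrite H4. replace (INR 4) with 4 by (simpl; ring). field. }
    rewrite HT, cos_PI2. unfold Rdiv. ring.
  - intros h Hc Hh Hp u [Hup [Hd [Hdd Heq]]].
    unfold periodic in Hp, Hup. fold T in Hp, Hup.
    split.
    + intros th.
      pose proof (key u h T th Hc Hup Hd Hdd Heq) as E.
      assert (Lb : cos T * RInt h th (th+T) <= RInt (fun p => cos (2*(p-th)-T) * h p) th (th+T)).
      { assert (S : RInt (fun x => cos T * h x) th (th+T) = cos T * RInt h th (th+T)).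
        { exact (@RInt_scal R_CompleteNormedModule h th (th+T) (cos T) (exR h Hc _ _)). }
        rewrite <- S. apply RInt_le; [lra| | |].
        - exact (@ex_RInt_scal R_CompleteNormedModule h th (th+T) (cos T) (exR h Hc _ _)).
        - apply exR. apply contw. auto.
        - intros x Hx. apply Rmult_le_compat_r; [apply Hh|]. apply cosb; lra. }
      assert (Avg : RInt h th (th+T) = RInt h 0 T) by (apply perI; auto).
      assert (Tot : RInt h (-PI) PI = INR m * RInt h 0 T).
      { rewrite <- (sumI h T Hc Hp (-PI) m). f_equal. nra. }
      rewrite Tot. rewrite Avg in Lb.
      set (I0 := RInt h 0 T) in *.
      set (J := RInt (fun p => cos (2*(p-th)-T) * h p) th (th+T)) in *.
      assert (R1 : 3 * T * cos T / sin T * (/ (2 * PI) * (INR m * I0)) = 3 / sin T * (cos T * I0) * ((T * INR m) / (2*PI))).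
      { field. split; lra. }
      rewrite R1, HTm.
      assert (R2 : 12 * u th = 3 / sin T * J) by (rewrite E; field; lra).
      rewrite R2. apply Rle_ge.
      replace (3 / sin T * (cos T * I0) * (2 * PI / (2 * PI))) with (3 / sin T * (cos T * I0)) by (field; split; lra).
      apply Rmult_le_compat_l; [|exact Lb].
      apply Rlt_le, Rdiv_lt_0_compat; lra.
    + intros [th0 H0] x.
      pose proof (key u h T th0 Hc Hup Hd Hdd Heq) as E.
      assert (Z : @eq R (RInt (fun p => cos (2*(p-th0)-T) * h p) th0 (th0+T)) 0) by (rewrite E; replace (u th0) with 0 by lra; ring).
      assert (Hin : forall y, th0 < y < th0 + T -> h y = 0).
      { intros y Hy.
        pose proof (pos_zero _ th0 (th0+T) (contw h th0 T Hc)) as P.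
        assert (P1 : cos (2*(y-th0)-T) * h y = 0).
        { apply P; auto. intros z Hz. apply Rmult_le_pos; [|apply Hh].
          apply cos_ge_0; lra. }
        apply Rmult_integral in P1. destruct P1 as [P1|P1]; auto.
        assert (0 < cos (2*(y-th0)-T)) by (apply cos_gt_0; lra). lra. }
      assert (Hend : h th0 = 0) by (apply (endpt h th0 T); auto).
      destruct (cover h T th0 HT0 Hp x) as [y [Hy ->]].
      destruct (Rle_lt_or_eq_dec th0 y (proj1 Hy)) as [Hl|He].
      * apply Hin; lra.
      * subst y; auto.
Qed.
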